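(* Let $G$ be a connected bipartite graph with color classes $E$ and $V$, let $\mathbf f$ be a hypertree of $(V,E)$ and $\Gamma$ a spanning tree of $G$ realizing $\mathbf f$. Let $E'\subset E$ be tight at $\mathbf f$. Then each part of the partition of $E'$ induced by the connected components of $\Gamma|_{E'}$ is itself tight at $\mathbf f$.
   Context: A hypertree of $(V,E)$ is a function $\mathbf f\colon E\to\mathbf N$ such that some spanning tree $\Gamma$ of $G$ has degree $\mathbf f(e)+1$ at every $e\in E$; such $\Gamma$ realizes $\mathbf f$. For a subgraph $H$ of $G$ and $E'\subset E$, $H|_{E'}$ is the graph formed by $E'$, all edges of $H$ adjacent to elements of $E'$, and their endpoints in $V$. Let $c(E')$ be the number of connected components of $G|_{E'}$ and $\bigcup E'$ the set of vertices of $V$ in $G|_{E'}$; set $\mu(\varnothing)=0$ and $\mu(E')=|\bigcup E'|-c(E')$ otherwise. A set $E'\subset E$ is tight at $\mathbf f$ if $\sum_{e\in E'}\mathbf f(e)=\mu(E')$. The components of $\Gamma|_{E'}$ partition $E'$. *)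

(* Defs.v *)
From mathcomp Require Import all_boot all_order all_algebra.
Set Implicit Arguments. Unset Strict Implicit. Unset Printing Implicit Defensive.

(* A bipartite graph G with colour classes E and V is given by its incidence
   relation  h : E -> V -> bool  (h e v = "e and v are adjacent").
   Subgraphs H of G (e.g. spanning trees) are given by relations
   h' with h' e v -> h e v. *)

Definition bgrel (E V : finType) (h : E -> V -> bool) : rel (E + V) :=
  fun x y => match x, y with
             | inl e, inr v => h e v
             | inr v, inl e => h e v
             | _, _ => false
             end.

Definition connected (E V : finType) (h : E -> V -> bool) : Prop :=
  forall x y : E + V, connect (bgrel h) x y.

Definition acyclic (E V : finType) (h : E -> V -> bool) : Prop :=
  forall c : seq (E + V), uniq c -> 2 < size c -> ~~ cycle (bgrel h) c.

Definition spanning_tree (E V : finType) (g gam : E -> V -> bool) : Prop :=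
  [/\ forall e v, gam e v -> g e v, connected gam & acyclic gam].

Definition deg (E V : finType) (gam : E -> V -> bool) (e : E) : nat :=
  #|[set v | gam e v]|.

Definition realizes (E V : finType) (gam : E -> V -> bool) (f : E -> nat) : Prop :=
  forall e, deg gam e = (f e).+1.

Definition hypertree (E V : finType) (g : E -> V -> bool) (f : E -> nat) : Prop :=
  exists gam, spanning_tree g gam /\ realizes gam f.

(* H|_{E'} : edges of H adjacent to E', vertices E' and their H-neighbours *)
Definition restr (E V : finType) (h : E -> V -> bool) (E' : {set E}) : E -> V -> bool :=
  fun e v => (e \in E') && h e v.

Definition bigU (E V : finType) (h : E -> V -> bool) (E' : {set E}) : {set V} :=
  [set v | [exists e in E', h e v]].

Definition rverts (E V : finType) (h : E -> V -> bool) (E' : {set E}) : {set E + V} :=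
  [set x | match x with inl e => e \in E' | inr v => v \in bigU h E' end].

Definition ncomp (E V : finType) (h : E -> V -> bool) (E' : {set E}) : nat :=
  n_comp (bgrel (restr h E')) (mem (rverts h E')).

Definition mu (E V : finType) (g : E -> V -> bool) (E' : {set E}) : int :=
  if E' == set0 then 0%R else (Posz #|bigU g E'| - Posz (ncomp g E'))%R.

Definition tight (E V : finType) (g : E -> V -> bool) (f : E -> nat) (E' : {set E}) : Prop :=
  Posz (\sum_(e in E') f e) = mu g E'.

(* Main.v *)
Require Import Defs.
From mathcomp Require Import all_boot all_order all_algebra.
From mathcomp Require Import zify.
Set Implicit Arguments. Unset Strict Implicit. Unset Printing Implicit Defensive.

Local Notation groot := fingraph.root.
Section Gen.
Variable T : finType.

Lemma closure_conn (r : rel T) (a : pred T) x y :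
  a x -> (forall u w, a u -> r u w -> a w) -> connect r x y -> a y.
Proof.
move=> ax step /connectP[p pp ->]; elim: p x ax pp => //= z p IH x ax /andP[rxz pp].
exact: IH (step _ _ ax rxz) pp.
Qed.

Lemma connect_lift (r r2 : rel T) x0 y :
  (forall u w, connect r x0 u -> r u w -> r2 u w) -> connect r x0 y -> connect r2 x0 y.
Proof.
move=> H cy.
have : connect r x0 y && connect r2 x0 y; last by case/andP.
apply: (closure_conn (a := fun u => connect r x0 u && connect r2 x0 u)) cy.
  by rewrite !connect0.
move=> u w /andP[c1 c2] ruw.
by rewrite (connect_trans c1 (connect1 ruw)) (connect_trans c2 (connect1 (H _ _ c1 ruw))).
Qed.

Lemma last_step (r : rel T) x y : connect r x y -> x != y -> exists2 z, connect r x z & r z y.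
Proof.
move=> /connectP[p pp ->]; elim/last_ind: p pp => [|p z _] /=; first by rewrite eqxx.
rewrite rcons_path last_rcons => /andP[pp rz] _.
by exists (last x p) => //; apply/connectP; exists p.
Qed.

Lemma ncompE (r : rel T) (sym : symmetric r) (a : {set T}) :
  (forall u w, r u w -> (u \in a) = (w \in a)) ->
  n_comp r a = #|[set groot r x | x in a]|.
Proof.
move=> cl; rewrite /n_comp_mem; apply: eq_card => x; rewrite !inE /=.
apply/andP/imsetP.
  by case=> /eqP rx xa; exists x.
case=> y ya ->; split; first exact: roots_root (sym_connect_sym sym) _.
apply: (closure_conn (a := mem a)) (connect_root r y) => //.
by move=> u w ua ruw; change (w \in a); rewrite -(cl u w ruw).
Qed.

Definition addE (r : rel T) x y : rel T :=
  fun u w => r u w || ((u == x) && (w == y)) || ((u == y) && (w == x)).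

Lemma connect_add r x y u w : connect (addE r x y) u w ->
  connect r u w || (connect r u x && connect r y w) || (connect r u y && connect r x w).
Proof.
move=> c; apply: (closure_conn (a := fun w => connect r u w || (connect r u x && connect r y w) || (connect r u y && connect r x w))) c.
  by rewrite connect0.
move=> v z H; rewrite /addE => /orP[/orP[rvz | /andP[/eqP Ev /eqP Ez]] | /andP[/eqP Ev /eqP Ez]].
- case/orP: H => [/orP[c|/andP[c1 c2]] | /andP[c1 c2]].
  + by rewrite (connect_trans c (connect1 rvz)).
  + by rewrite c1 (connect_trans c2 (connect1 rvz)) orbT.
  + by rewrite c1 (connect_trans c2 (connect1 rvz)) orbT.
- subst v z; case/orP: H => [/orP[H|/andP[H _]]|/andP[H _]]; by rewrite ?H ?connect0 ?orbT.
- subst v z; case/orP: H => [/orP[H|/andP[H _]]|/andP[H _]]; by rewrite ?H ?connect0 ?orbT.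
Qed.

Lemma ncomp_add (r : rel T) (sym : symmetric r) x y (a : {set T}) :
  x \in a -> y \in a -> (forall u w, r u w -> (u \in a) = (w \in a)) ->
  ~~ connect r x y -> n_comp r a = (n_comp (addE r x y) a).+1.
Proof.
move=> xa ya cl nc.
have syma : symmetric (addE r x y).
  move=> u w; rewrite /addE sym.
  by case: (u == x); case: (u == y); case: (w == x); case: (w == y); rewrite /= ?orbT ?orbF.
have cl' : forall u w, addE r x y u w -> (u \in a) = (w \in a).
  move=> u w /orP[/orP[/cl // | /andP[/eqP Ev /eqP Ez]] | /andP[/eqP Ev /eqP Ez]];
    by subst u w; rewrite xa ya.
have sub : subrel (connect r) (connect (addE r x y)).
  by apply: connect_sub => u w ruw; apply: connect1; rewrite /addE ruw.
rewrite !ncompE //.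
set S1 := [set groot r z | z in a]; set phi := groot (addE r x y).
have phiS1 : phi @: S1 = [set phi z | z in a].
  rewrite -imset_comp; apply: eq_in_imset => z za; rewrite /phi /=.
  idtac.
  
  apply/(fingraph.rootP (sym_connect_sym syma)); apply: sub.
  by rewrite (sym_connect_sym sym) connect_root.
set T0 := S1 :\ groot r y.
have rxT0 : groot r x \in T0.
  by rewrite !inE root_connect ?nc ?(imset_f _ xa) //; exact: sym_connect_sym.
have ryS1 : groot r y \in S1 by rewrite imset_f.
have phiT0 : phi @: T0 = phi @: S1.
  apply/eqP; rewrite eqEsubset imsetS ?subsetDl //=; apply/subsetP => _ /imsetP[z zS1 ->].
  case: (z =P groot r y) => [-> | ne].
    apply/imsetP; exists (groot r x) => //.
    apply/(fingraph.rootP (sym_connect_sym syma)).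
    have h1 : connect r (groot r y) y by rewrite (sym_connect_sym sym) connect_root.
    have h2 : addE r x y y x by rewrite /addE !eqxx orbT.
    apply: (connect_trans (sub _ _ h1)).
    apply: (connect_trans (connect1 h2)).
    exact: sub (connect_root _ _).
  by apply/imsetP; exists z => //; rewrite !inE zS1 andbT; apply/eqP.
have inj : {in T0 &, injective phi}.
  move=> u w /setD1P[uy /imsetP[u0 _ Eu]] /setD1P[wy /imsetP[w0 _ Ew]]; subst u w.
  move/(fingraph.rootP (sym_connect_sym syma))/connect_add.
  case/orP => [/orP[c|/andP[c1 c2]]|/andP[c1 c2]].
  - by move: c; rewrite -(root_connect (sym_connect_sym sym)) !(root_root (sym_connect_sym sym)) => /eqP.
  - move: c2; rewrite -(root_connect (sym_connect_sym sym)) (root_root (sym_connect_sym sym)) => /eqP E.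
    by rewrite -E eqxx in wy.
  - move: c1; rewrite -(root_connect (sym_connect_sym sym)) (root_root (sym_connect_sym sym)) => /eqP E.
    by rewrite E eqxx in uy.
rewrite -phiS1 -phiT0 card_in_imset // (cardsD1 (groot r y) S1) ryS1.
by rewrite add1n.
Qed.

Lemma ncomp_strict (r r' : rel T) (sym : symmetric r) (sym' : symmetric r') (a : {set T}) x y :
  subrel r r' ->
  (forall u w, r u w -> (u \in a) = (w \in a)) ->
  (forall u w, r' u w -> (u \in a) = (w \in a)) ->
  x \in a -> y \in a -> r' x y -> ~~ connect r x y -> n_comp r' a < n_comp r a.
Proof.
move=> srr cl cl' xa ya rxy nc.
rewrite !ncompE //.
set S1 := [set groot r z | z in a]; set phi := groot r'.
have sub : subrel (connect r) (connect r').
  by apply: connect_sub => u w ruw; apply: connect1; apply: srr.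
have phiS1 : phi @: S1 = [set phi z | z in a].
  rewrite -imset_comp; apply: eq_in_imset => z za; rewrite /phi /=.
  apply/(fingraph.rootP (sym_connect_sym sym')); apply: sub.
  by rewrite (sym_connect_sym sym) connect_root.
rewrite -phiS1 ltn_neqAle leq_imset_card andbT.
apply/negP => /imset_injP inj.
have : groot r x = groot r y.
  apply: inj; rewrite ?imset_f //.
  apply/(fingraph.rootP (sym_connect_sym sym')).
  have h1 : connect r (groot r x) x by rewrite (sym_connect_sym sym) connect_root.
  apply: (connect_trans (sub _ _ h1)).
  apply: (connect_trans (connect1 rxy)); exact: sub (connect_root _ _).
by move/(fingraph.rootP (sym_connect_sym sym)); rewrite (negbTE nc).
Qed.

Lemma ncomp_nil (a : {set T}) : n_comp (fun _ _ : T => false) a = #|a|.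
Proof.
rewrite ncompE //.
have rx : forall x, groot (fun _ _ : T => false) x = x.
  by move=> x; have /connectP[[|z p] //= _ ->] := connect_root (fun _ _ : T => false) x.
by rewrite (eq_imset _ rx) imset_id.
Qed.

End Gen.

Section Bip.
Variables E V : finType.

Definition relF (F : {set E * V}) : rel (E + V) := bgrel (fun e v => (e, v) \in F).

Lemma bgrel_sym (h : E -> V -> bool) : symmetric (bgrel h).
Proof. by move=> [e|v] [e'|v']. Qed.

Lemma eq_inl (a b : E) : (inl a == inl b :> E + V) = (a == b).
Proof. by apply/eqP/eqP => [[]|->]. Qed.
Lemma eq_inr (a b : V) : (inr a == inr b :> E + V) = (a == b).
Proof. by apply/eqP/eqP => [[]|->]. Qed.
Lemma eq_inlr (a : E) (b : V) : (inl a == inr b :> E + V) = false.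
Proof. by apply/eqP. Qed.
Lemma eq_inrl (a : E) (b : V) : (inr b == inl a :> E + V) = false.
Proof. by apply/eqP. Qed.

Lemma relF_add (F : {set E * V}) (p : E * V) : p \notin F ->
  relF (p |: F) =2 addE (relF F) (inl p.1) (inr p.2).
Proof.
case: p => e v /= pF [e1|v1] [e2|v2]; rewrite /addE /relF /= ?inE ?orbF //.
- by rewrite eq_inlr andbF.
- by rewrite eq_inl eq_inr xpair_eqE orbC.
- by rewrite eq_inl eq_inr xpair_eqE orbC andbC.
- by rewrite eq_inrl andbF.
Qed.

Lemma acyc_nconn (gam : E -> V -> bool) (F : {set E * V}) e v :
  acyclic gam -> (forall q, q \in F -> gam q.1 q.2) -> gam e v -> (e, v) \notin F ->
  ~~ connect (relF F) (inl e) (inr v).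
Proof.
move=> Hac HF gev nin; apply/negP => /connectP[p pp lp].
move: lp; case: (shortenP pp) => p' pp' up' _ lp {pp}.
have sub : subrel (relF F) (bgrel gam).
  by move=> [e1|v1] [e2|v2] //= /HF.
have cyc : cycle (bgrel gam) (inl e :: p').
  by rewrite /= rcons_path (sub_path sub pp') -lp /=.
have := Hac _ up'; rewrite cyc => /(_ _) H.
suff : 2 < size (inl e :: p') by move/H.
case: p' pp' up' lp cyc {H} => [|a [|b [|c q]]] //= pp' _ lp _.
- by move: pp'; rewrite -lp /= andbT (negbTE nin).
Qed.

Lemma forest (gam : E -> V -> bool) (a : {set E + V}) : acyclic gam ->
  forall n (F : {set E * V}), #|F| = n ->
  (forall q, q \in F -> gam q.1 q.2) ->
  (forall q, q \in F -> (inl q.1 \in a) && (inr q.2 \in a)) ->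
  n_comp (relF F) a + #|F| = #|a|.
Proof.
move=> Hac; elim=> [|n IH] F cF HF Ha.
  move/eqP: cF; rewrite cards_eq0 => /eqP ->.
  rewrite cards0 addn0 -(ncomp_nil a); apply: eq_n_comp; apply: eq_connect.
  by move=> [x|x] [y|y] //=; rewrite inE.
have : 0 < #|F| by rewrite cF.
rewrite card_gt0 => /set0Pn[q qF].
set F0 := F :\ q.
have eF : F = q |: F0 by rewrite setD1K.
have qF0 : q \notin F0 by rewrite !inE eqxx.
have cF0 : #|F0| = n by move: cF; rewrite (cardsD1 q F) qF add1n => -[].
have HF0 : forall q', q' \in F0 -> gam q'.1 q'.2 by move=> q' /setD1P[_ /HF].
have Ha0 : forall q', q' \in F0 -> (inl q'.1 \in a) && (inr q'.2 \in a)
  by move=> q' /setD1P[_ /Ha].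
have IH0 := IH F0 cF0 HF0 Ha0.
have /andP[xa ya] := Ha q qF.
have cl : forall u w, relF F0 u w -> (u \in a) = (w \in a).
  move=> [e1|v1] [e2|v2] //= /Ha0 /andP[h1 h2]; by rewrite h1 h2.
have nc : ~~ connect (relF F0) (inl q.1) (inr q.2).
  apply: (acyc_nconn Hac HF0 (HF q qF)).
  by rewrite -surjective_pairing.
have := ncomp_add (@bgrel_sym _) xa ya cl nc.
rewrite -(eq_n_comp (eq_connect (relF_add qF0))) -eF => E1.
by rewrite -IH0 E1 (cardsD1 q F) qF cF0 addSnnS add1n.
Qed.

Lemma card_edges (h : E -> V -> bool) (X : {set E}) :
  #|[set q : E * V | restr h X q.1 q.2]| = \sum_(e in X) deg h e.
Proof.
rewrite -sum1_card /deg.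
rewrite (eq_bigr (fun e => \sum_(v | h e v) 1)); last first.
  by move=> e _; rewrite -sum1_card; apply: eq_bigl => v; rewrite inE.
rewrite pair_big_dep /=; apply: eq_bigl => -[e v]; by rewrite !inE.
Qed.

Lemma card_rverts (h : E -> V -> bool) (X : {set E}) :
  #|rverts h X| = #|X| + #|Defs.bigU h X|.
Proof.
rewrite -!sum1_card big_sumType /=; congr (_ + _); apply: eq_bigl => x; by rewrite !inE.
Qed.

Lemma rv_edge (h h' : E -> V -> bool) (X : {set E}) u w :
  (forall e v, h e v -> h' e v) ->
  bgrel (restr h X) u w -> (u \in rverts h' X) && (w \in rverts h' X).
Proof.
move=> hh; case: u w => [e|v] [e'|v'] //= /andP[eX hev]; rewrite !inE eX /=.
  by apply/existsP; exists e; rewrite eX hh.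
by rewrite andbT; apply/existsP; exists e'; rewrite eX hh.
Qed.
End Bip.

Theorem lemma2p9 (E V : finType) (g gam : E -> V -> bool) (f : E -> nat)
    (E' : {set E}) :
  connected g -> hypertree g f -> spanning_tree g gam -> realizes gam f ->
  tight g f E' ->
  forall e0, e0 \in E' ->
    tight g f [set e in E' | connect (bgrel (restr gam E')) (inl e0) (inl e)].
Proof.
move=> _ _ [gsub _ Hac] Hreal Htight e0 e0E.
set r := bgrel (restr gam E').
set r' := bgrel (restr g E').
set a := rverts g E'.
have sumdeg : forall X : {set E}, \sum_(e in X) deg gam e = \sum_(e in X) f e + #|X|.
  move=> X; rewrite (eq_bigr (fun e => f e + 1)); last by move=> e _; rewrite Hreal addn1.
  by rewrite big_split /= sum1_card.
have E'n0 : E' != set0 by apply/set0Pn; exists e0.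
have Ht : (\sum_(e in E') f e + ncomp g E' = #|Defs.bigU g E'|)%N.
  move: Htight; rewrite /tight /mu (negbTE E'n0); lia.
have HF : forall q, q \in [set q : E * V | restr gam E' q.1 q.2] -> gam q.1 q.2.
  by move=> q; rewrite inE => /andP[].
have Ha : forall q, q \in [set q : E * V | restr gam E' q.1 q.2] ->
    (inl q.1 \in a) && (inr q.2 \in a).
  move=> q; rewrite inE => H; exact: (rv_edge (u := inl q.1) (w := inr q.2) gsub H).
have Hf := @forest _ _ gam a Hac _ _ (erefl _) HF Ha.
have rFr : relF [set q : E * V | restr gam E' q.1 q.2] =2 r.
  by move=> [x|x] [y|y] //=; rewrite inE.
rewrite (eq_n_comp (eq_connect rFr)) card_edges sumdeg card_rverts in Hf.
have eqc : n_comp r a = n_comp r' a.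
  have mm : forall (rr : rel (E + V)) (X : {set E + V}), n_comp rr (mem X) = n_comp rr X by [].
  rewrite /ncomp -/r' -/a mm in Ht; lia.
have sub : subrel r r'.
  by move=> [x|x] [y|y] //= /andP[h1 h2]; rewrite /restr h1 gsub.
have clr : forall u w, r u w -> (u \in a) = (w \in a).
  by move=> u w /(rv_edge gsub) /andP[h1 h2]; rewrite h1 h2.
have clr' : forall u w, r' u w -> (u \in a) = (w \in a).
  by move=> u w /(rv_edge (fun _ _ x => x)) /andP[h1 h2]; rewrite h1 h2.
have Hconn : forall e v, e \in E' -> g e v -> connect r (inl e) (inr v).
  move=> e v eE gev; apply/negPn/negP => nc.
  have xa : inl e \in a by rewrite inE.
  have ya : inr v \in a by rewrite !inE; apply/existsP; exists e; rewrite eE gev.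
  have rxy : r' (inl e) (inr v) by rewrite /= /restr eE gev.
  have := ncomp_strict (@bgrel_sym _ _ _) (@bgrel_sym _ _ _) sub clr clr' xa ya rxy nc.
  by rewrite eqc ltnn.
set P := [set e in E' | connect r (inl e0) (inl e)].
have e0P : e0 \in P by rewrite inE e0E connect0.
have lift : forall h : E -> V -> bool, (forall e v, gam e v -> h e v) -> forall y,
    connect r (inl e0) y -> connect (bgrel (restr h P)) (inl e0) y.
  move=> h hh y; apply: connect_lift => -[e|v] [e'|v'] //= cu.
  - move=> /andP[eE gev]; by rewrite /restr inE eE cu hh.
  - move=> /andP[eE gev]; rewrite /restr inE eE (hh _ _ gev) andbT /=.
    apply: (connect_trans cu); apply: connect1; by rewrite /= /restr eE gev.
have comp1 : forall h : E -> V -> bool, (forall e v, gam e v -> h e v) -> ncomp h P = 1.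
  move=> h hh; rewrite /ncomp -(n_comp_connect (sym_connect_sym (@bgrel_sym _ _ (restr h P))) (inl e0)).
  apply: eq_n_comp_r => y; apply/idP/idP.
  - case: y => [e|v]; rewrite inE.
    + rewrite inE => /andP[_ c]; exact: lift.
    + rewrite inE => /existsP[e /andP[eP hev]].
      move: (eP); rewrite inE => /andP[_ c].
      apply: (connect_trans (lift h hh _ c)); apply: connect1.
      by rewrite /= /restr eP hev.
  - move=> c; apply: (closure_conn (a := mem (rverts h P))) c.
      by change (inl e0 \in rverts h P); rewrite inE.
    by move=> u w _ /(rv_edge (fun _ _ x => x)) /andP[_ H]; exact: H.
have bigUeq : Defs.bigU g P = Defs.bigU gam P.
  apply/setP => v; rewrite !inE; apply/existsP/existsP => -[e /andP[eP hev]];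
    last by exists e; rewrite eP gsub.
  move: (eP); rewrite inE => /andP[eE c].
  have c2 : connect r (inl e0) (inr v) := connect_trans c (Hconn e v eE hev).
  have [z cz] := last_step c2 (negbT (eq_inlr e0 v)).
  case: z cz => [e'|v'] cz //= /andP[e'E gam'].
  by exists e'; rewrite inE e'E cz gam'.
have HFP : forall q, q \in [set q : E * V | restr gam P q.1 q.2] -> gam q.1 q.2.
  by move=> q; rewrite inE => /andP[].
have HaP : forall q, q \in [set q : E * V | restr gam P q.1 q.2] ->
    (inl q.1 \in rverts gam P) && (inr q.2 \in rverts gam P).
  move=> q; rewrite inE => H; exact: (rv_edge (u := inl q.1) (w := inr q.2) (fun _ _ x => x) H).
have HfP := @forest _ _ gam (rverts gam P) Hac _ _ (erefl _) HFP HaP.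
have rFP : relF [set q : E * V | restr gam P q.1 q.2] =2 bgrel (restr gam P).
  by move=> [x|x] [y|y] //=; rewrite inE.
rewrite (eq_n_comp (eq_connect rFP)) card_edges sumdeg card_rverts in HfP.
have c1 := comp1 gam (fun _ _ x => x); rewrite /ncomp in c1; rewrite c1 in HfP.
have Pn0 : P != set0 by apply/set0Pn; exists e0.
rewrite /tight /mu (negbTE Pn0) (comp1 g gsub) bigUeq.
lia.
Qed.
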